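(* Let $X,K$ be topological spaces, $f:X\times K\to\mathbb R$ separately continuous, and $\phi:K\to C_p(X)$ given by $\phi(y)(x)=f(x,y)$. Suppose there exist a set $\Gamma\subseteq\mathbb R^X$ and a sequence $(\mathcal U_n)_{n\in\mathbb N}$ of countable covers of $K$ such that $X$ is $\sigma_\Gamma$-$\beta$-defavorable and $(\mathcal U_n)_{n\in\mathbb N}$ is countably pair complete with respect to $(\phi,\Gamma)$. Then for every $\varepsilon>0$ there is a residual subset $R_\varepsilon$ of $X$ such that for every $(x,y)\in R_\varepsilon\times K$ there are finitely many sets $F_i\in\mathcal U_i$, $i=0,\dots,k$, with $y\in\bigcap_{i\le k}F_i$, and a neighborhood $O$ of $(x,y)$ in $X\times K$ such that $|f(x,y)-f(x',y')|<\varepsilon$ for every $(x',y')\in O\cap\big(X\times\bigcap_{i\le k}F_i\big)$.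
   Context: $f$ is separately continuous if $f(x,\cdot)$ and $f(\cdot,y)$ are continuous for all $x\in X$, $y\in K$. $C_p(X)$ is the space of real continuous functions on $X$ with the pointwise convergence topology; $\mathbb R^X$ carries the product topology. A decreasing sequence $(U_n)$ of subsets of $K$ is countably pair complete with respect to $(\phi,\Gamma)$ if for any sequences $(y_n),(z_n)$ with $y_n,z_n\in U_n$ for all $n$, the sequence $(\phi(y_n)-\phi(z_n))_n$ has at least one cluster point in $\mathbb R^X$ belonging to $\Gamma$. A sequence of covers $\mathcal U_n=\{U^n_k:k\in\mathbb N\}$ of $K$ is countably pair complete with respect to $(\phi,\Gamma)$ if for each $\sigma\in\mathbb N^{\mathbb N}$ the sequence $(\bigcap_{i\le n}U^i_{\sigma(i)})_{n}$ is. The game $\mathcal J_\Gamma$ on $X$: $\beta$ first chooses a nonempty open $V_0\subseteq X$, then $\alpha$ chooses a nonempty open $U_0\subseteq V_0$ and $a_0\in X$; at step $n+1$, $\beta$ chooses a nonempty open $V_{n+1}\subseteq U_n$ and $\alpha$ a nonempty open $U_{n+1}\subseteq V_{n+1}$ and $a_{n+1}\in X$. $\alpha$ wins iff for each $g\in\Gamma$ there is $t\in\bigcap_nU_n$ with $g(t)\in\overline{\{g(a_n):n\in\mathbb N\}}$. $X$ is $\sigma_\Gamma$-$\beta$-defavorable if $\beta$ has no winning strategy in $\mathcal J_\Gamma$. A set is residual if its complement is of first category. *)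

(* Defs.v *)
From HB Require Import structures.
From mathcomp Require Import all_boot all_order all_algebra.
From mathcomp Require Import all_classical all_reals all_analysis.
Set Implicit Arguments. Unset Strict Implicit. Unset Printing Implicit Defensive.
Import Order.TTheory GRing.Theory Num.Theory.
Import numFieldNormedType.Exports.
Local Open Scope classical_set_scope.
Local Open Scope ring_scope.

Definition sep_continuous (R : realType) (X K : topologicalType)
  (f : X * K -> R) : Prop :=
  (forall x : X, continuous (fun y : K => f (x, y))) /\
  (forall y : K, continuous (fun x : X => f (x, y))).

(* phi : K -> C_p(X), phi(y)(x) = f(x,y), viewed in R^X (product topology). *)
Definition phi_of (R : realType) (X K : topologicalType) (f : X * K -> R)
  (y : K) : {ptws X -> R} := fun x => f (x, y).

Definition cpc_seq (R : realType) (X K : topologicalType)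
  (phi : K -> {ptws X -> R}) (Gamma : set {ptws X -> R})
  (W : nat -> set K) : Prop :=
  forall y z : nat -> K, (forall n, W n (y n)) -> (forall n, W n (z n)) ->
    exists g : {ptws X -> R}, Gamma g /\
      cluster ((fun n => (fun x => phi (y n) x - phi (z n) x) : {ptws X -> R}) @ \oo) g.

Definition seq_of_countable_covers (K : Type) (U : nat -> nat -> set K) : Prop :=
  forall n, \bigcup_k U n k = setT.

Definition cpc_covers (R : realType) (X K : topologicalType)
  (phi : K -> {ptws X -> R}) (Gamma : set {ptws X -> R})
  (U : nat -> nat -> set K) : Prop :=
  forall s : nat -> nat,
    cpc_seq phi Gamma (fun n => \bigcap_(i in [set i | (i <= n)%N]) U i (s i)).

(* A strategy for beta maps the history of alpha's
   moves ((U_0,a_0),...,(U_{n-1},a_{n-1})) to beta's next move V_n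
   (beta's own earlier moves are determined by the strategy). *)
Definition beta_strategy (X : Type) := seq (set X * X) -> set X.

Definition history (X : Type) (U : nat -> set X) (a : nat -> X) (n : nat)
  : seq (set X * X) := [seq (U i, a i) | i <- iota 0 n].

Definition alpha_legal (X : topologicalType) (s : beta_strategy X)
  (U : nat -> set X) (a : nat -> X) (i : nat) : Prop :=
  open (U i) /\ U i !=set0 /\ U i `<=` s (history U a i).

Definition beta_legal (X : topologicalType) (s : beta_strategy X)
  (U : nat -> set X) (a : nat -> X) (n : nat) : Prop :=
  open (s (history U a n)) /\ s (history U a n) !=set0 /\
  (forall m, n = m.+1 -> s (history U a n) `<=` U m).

Definition alpha_wins (R : realType) (X : topologicalType)
  (Gamma : set {ptws X -> R}) (U : nat -> set X) (a : nat -> X) : Prop :=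
  forall g, Gamma g ->
    exists t : X, (forall n, U n t) /\
      closure [set (g : X -> R) (a n) | n in [set: nat]] ((g : X -> R) t).

Definition beta_winning (R : realType) (X : topologicalType)
  (Gamma : set {ptws X -> R}) (s : beta_strategy X) : Prop :=
  (forall U a n, (forall i, (i < n)%N -> alpha_legal s U a i) ->
      beta_legal s U a n) /\
  (forall U a, (forall i, alpha_legal s U a i) -> ~ alpha_wins Gamma U a).

Definition sigma_beta_defavorable (R : realType) (X : topologicalType)
  (Gamma : set {ptws X -> R}) : Prop :=
  ~ exists s : beta_strategy X, beta_winning Gamma s.

Definition nowhere_dense (X : topologicalType) (A : set X) : Prop :=
  interior (closure A) = set0.

Definition residual (X : topologicalType) (A : set X) : Prop :=
  exists N : nat -> set X, (forall n, nowhere_dense (N n)) /\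
    ~` A `<=` \bigcup_n N n.

(* Main.v *)
Require Import Defs.
From HB Require Import structures.
From mathcomp Require Import all_boot all_order all_algebra.
From mathcomp Require Import all_classical all_reals all_analysis.
From mathcomp Require Import lra zify.
Import Order.TTheory GRing.Theory Num.Theory.
Import numFieldNormedType.Exports.
Local Open Scope classical_set_scope.
Local Open Scope ring_scope.

Set Implicit Arguments. Unset Strict Implicit.

Section Cat.
Context {X : topologicalType}.

Lemma ndP (N : set X) : nowhere_dense N ->
  forall V, open V -> V `<=` closure N -> V = set0.
Proof.
move=> nd V oV VN; apply/seteqP; split => // p Vp.
have : interior (closure N) p.
  by rewrite /interior; apply: filterS VN _; exact: open_nbhs_nbhs.
by rewrite nd.
Qed.

Lemma ndI (N : set X) : (forall V, open V -> V `<=` closure N -> V = set0) ->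
  nowhere_dense N.
Proof.
move=> H; apply: H; first exact: open_interior.
exact: interior_subset.
Qed.

Lemma ndS (A B : set X) : A `<=` B -> nowhere_dense B -> nowhere_dense A.
Proof.
move=> AB nd; apply: ndI => V oV VA.
exact: (ndP nd oV (subset_trans VA (closureS AB))).
Qed.

Lemma nd0 : nowhere_dense (set0 : set X).
Proof. by apply: ndI => V oV; rewrite closure0 => H; apply/seteqP; split => // x /H. Qed.

Definition meag (S : set X) := exists N : nat -> set X,
  (forall n, nowhere_dense (N n)) /\ S `<=` \bigcup_n N n.

Lemma meagS (A B : set X) : A `<=` B -> meag B -> meag A.
Proof. by move=> AB [N [ndN BN]]; exists N; split => //; apply: subset_trans BN. Qed.

Lemma nd_meag (A : set X) : nowhere_dense A -> meag A.
Proof.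
move=> nd; exists (fun n => if n is 0%N then A else set0); split.
  by case => //= _; exact: nd0.
by move=> x Ax; exists 0%N.
Qed.

Lemma meag_bigcup (S : nat -> set X) : (forall j, meag (S j)) ->
  meag (\bigcup_j S j).
Proof.
move=> H; have [N HN] := choice H.
exists (fun k => match (unpickle k : option (nat * nat)) with
                 | Some p => N p.1 p.2 | None => set0 end); split.
  by move=> k; case: (unpickle k) => [[j n]|] /=; [exact: (HN j).1|exact: nd0].
move=> x [j _ Sx]; have [n _ Nx] := (HN j).2 x Sx.
by exists (pickle (j, n)) => //; rewrite pickleK.
Qed.

Lemma meagU (A B : set X) : meag A -> meag B -> meag (A `|` B).
Proof.
move=> mA mB.
have -> : A `|` B = \bigcup_j (if j is 0%N then A else B).
  apply/seteqP; split => [x [Ax|Bx]|x [[|j] _ /= ?]]; [by exists 0%N|by exists 1%N|by left|by right].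
by apply: meag_bigcup => -[|j].
Qed.


Lemma onbhs (V : set X) p : open V -> V p -> nbhs p V.
Proof. by move=> oV Vp; apply: open_nbhs_nbhs; split. Qed.

Lemma clP (A V : set X) p : closure A p -> open V -> V p -> exists q, A q /\ V q.
Proof. by move=> cA oV Vp; have [q [Aq Vq]] := cA V (onbhs oV Vp); exists q. Qed.

Lemma nd_bd (O : set X) : open O -> nowhere_dense (closure O `\` O).
Proof.
move=> oO; apply: ndI => V oV VC; apply/seteqP; split => // p Vp.
have [q [[cq nq] Vq]] := clP (VC p Vp) oV Vp.
have [r [Or Vr]] := clP cq oV Vq.
have [s [[_ ns] [Vs Os]]] := clP (VC r Vr) (openI oV oO) (conj Vr Or).
by case: ns.
Qed.

Lemma nd_disj (I : Type) (D : set I) (O N : I -> set X) :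
  (forall i, D i -> open (O i)) ->
  (forall i j, D i -> D j -> O i `&` O j !=set0 -> i = j) ->
  (forall i, D i -> nowhere_dense (N i)) ->
  nowhere_dense (\bigcup_(i in D) (N i `&` O i)).
Proof.
move=> oO dis nd; apply: ndI => V oV VC; apply/seteqP; split => // p Vp.
have [q [[i Di [Nq Oq]] Vq]] := clP (VC p Vp) oV Vp.
have : (V `&` O i) = set0.
  apply: (ndP (nd i Di)); first exact: (openI oV (oO i Di)).
  move=> r [Vr Or] B Br.
  have B' : nbhs r (B `&` (V `&` O i)).
    apply: filterI => //; apply: onbhs => //; first exact: (openI oV (oO i Di)).
  have [s [[j Dj [Ns Os]] [Bs [Vs Ois]]]] := VC r Vr _ B'.
  have ij : i = j by apply: dis => //; exists s.
  by subst j; exists s.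
by move=> /seteqP[+ _] => /(_ q (conj Vq Oq)).
Qed.

Lemma banach (S : set X) :
  let D := [set Q0 | open Q0 /\ meag (S `&` Q0)] in
  meag (S `&` \bigcup_(Q0 in D) Q0).
Proof.
move=> D.
have [E [ED trE maxE]] := ex_maximal_disjoint_subcollection id D.
pose U := \bigcup_(Q0 in E) Q0.
have oU : open U by apply: bigcup_open => Q0 /ED [].
have sub : \bigcup_(Q0 in D) Q0 `<=` closure U.
  move=> x [Q0 HO Ox]; apply: contrapT => ncx.
  pose Qp := Q0 `&` ~` closure U.
  have oQp : open Qp.
    apply: openI; first by case: HO.
    exact/closed_openC/closed_closure.
  have DOq : D Qp.
    split => //; apply: meagS (HO.2); by move=> y [Sy [Oy _]].
  apply: (maxE (E `|` [set Qp])).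
  - split; first by move=> ? ?; left.
    move=> h; have EQp : E Qp by apply: h; right.
    by apply: (ncx); apply: subset_closure; exists Qp => //; exact: (conj Ox ncx).
  - by move=> Q [/ED//|->].
  - move=> P Q [EP|->] [EQ|->] //= PQ.
    + exact: trE.
    + case: PQ => y [Py [_ ncy]]; case: ncy; apply: subset_closure.
      by exists P.
    + case: PQ => y [[_ ncy] Qy]; case: ncy; apply: subset_closure.
      by exists Q.
have [NN HN] : {NN : set X -> nat -> set X & forall Q0, E Q0 ->
    (forall n, nowhere_dense (NN Q0 n)) /\ S `&` Q0 `<=` \bigcup_n NN Q0 n}.
  apply: (@choice _ _ (fun Q0 (NN : nat -> set X) => E Q0 -> (forall n, nowhere_dense (NN n)) /\ S `&` Q0 `<=` \bigcup_n NN n)) => Q0.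
  have [EO|nEO] := pselect (E Q0); last by exists (fun _ => set0).
  by have [_ [N HN]] := ED Q0 EO; exists N.
pose M n := \bigcup_(Q0 in E) (NN Q0 n `&` id Q0).
have ndM : forall n, nowhere_dense (M n).
  move=> n; apply: nd_disj.
  - by move=> Q0 /ED[].
  - by move=> i j Ei Ej ij; apply: trE.
  - by move=> Q0 EO; exact: (HN Q0 EO).1.
apply: (@meagS _ ((\bigcup_n M n) `|` (closure U `\` U))).
  move=> x [Sx Dx]; have [Ux|nUx] := pselect (U x); last by right; split => //; exact: sub.
  left; case: Ux => Q0 EO Ox.
  have [n _ Nx] := (HN Q0 EO).2 x (conj Sx Ox).
  by exists n => //; exists Q0.
apply: meagU; last exact/nd_meag/nd_bd.
by exists M; split.
Qed.

Lemma loc (S U : set X) : open U -> ~ meag (S `&` U) ->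
  exists W, [/\ open W, W !=set0, W `<=` U &
    forall V, open V -> V !=set0 -> V `<=` W -> ~ meag (S `&` V)].
Proof.
move=> oU nm.
pose D := [set Q0 | open Q0 /\ meag (S `&` Q0)].
pose Om := \bigcup_(Q0 in D) Q0.
have oW : open (U `&` ~` closure Om).
  by apply: openI => //; exact/closed_openC/closed_closure.
have [[w Ww]|W0] := pselect ((U `&` ~` closure Om) !=set0).
  exists (U `&` ~` closure Om); split; [exact: oW|by exists w|by move=> y []|].
  move=> V oV [v Vv] VW mV.
  have DV : D V by [].
  have [_ ncv] := VW v Vv; apply: ncv; apply: subset_closure; by exists V.
case: nm; apply: (@meagS _ ((S `&` Om) `|` (closure Om `\` Om))).
  move=> x [Sx Ux]; have [Ox|nOx] := pselect (Om x); first by left.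
  right; split => //; apply: contrapT => ncx; apply: W0; by exists x.
apply: meagU; first exact: banach.
apply/nd_meag/nd_bd; apply: bigcup_open => Q0 [].
by [].
Qed.

End Cat.


Section Main.
Variables (R : realType) (X K : topologicalType) (f : X * K -> R).
Variable (U : nat -> nat -> set K).
Variable (eps : R).
Hypothesis eps0 : 0 < eps.
Hypothesis sepf : sep_continuous f.

Definition Wk (s : nat -> nat) (n : nat) : set K :=
  \bigcap_(i in [set i | (i <= n)%N]) U i (s i).

Definition dl := eps / 4.
Definition cc := eps / 2.

Definition Aset (n : nat) (s : nat -> nat) : set X :=
  [set x | exists V, [/\ open V, V x & exists F : seq X,
    forall x', V x' -> forall y z, Wk s n y -> Wk s n z ->
      (forall a, a \in F -> `|f (a, y) - f (a, z)| < dl) ->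
      `|f (x', y) - f (x', z)| <= cc]].

Definition Ebad : set X := [set x | exists s, forall n, ~ Aset n s x].

Lemma Wk_ext s1 s2 n : (forall i, (i <= n)%N -> s1 i = s2 i) -> Wk s1 n = Wk s2 n.
Proof.
move=> h; apply/seteqP; split => y Hy i /= iln; [rewrite -h // | rewrite h //];
  exact: Hy.
Qed.

Lemma nbhs_finite (F : seq X) (y : K) :
  nbhs y [set y' | forall a, a \in F -> `|f (a, y) - f (a, y')| < dl].
Proof.
have dl0 : 0 < dl by rewrite /dl divr_gt0.
elim: F => [|a F IH]; first by apply: filterS filterT => y' _ a.
have Ha : nbhs y [set y' | `|f (a, y) - f (a, y')| < dl].
  exact: (cvgr_dist_lt _ _ (sepf.1 a y) _ dl0).
apply: filterS (filterI Ha IH) => y' [h1 h2] b.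
by rewrite in_cons => /orP[/eqP ->|]; [exact: h1|exact: h2].
Qed.

Lemma good_side x y : ~ Ebad x ->
  seq_of_countable_covers U ->
  exists (k : nat) (s : nat -> nat),
    (forall i, (i <= k)%N -> U i (s i) y) /\
    exists O : set (X * K), nbhs (x, y) O /\
      forall x' y', O (x', y') -> (forall i, (i <= k)%N -> U i (s i) y') ->
        `|f (x, y) - f (x', y')| < eps.
Proof.
move=> nE cov.
have [s Hs] : {s : nat -> nat & forall i, U i (s i) y}.
  apply: (@choice _ _ (fun i k => U i k y)) => i.
  have : (\bigcup_k U i k) y by rewrite cov.
  by case=> k _ Uk; exists k.
have [n An] : exists n, Aset n s x.
  apply: contrapT => h; apply: nE; exists s => n An; apply: h; by exists n.
case: An => V [oV Vx [F HF]].
exists n, s; split; first by move=> i _; exact: Hs.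
have e20 : 0 < eps / 2 by rewrite divr_gt0.
exists ((V `&` [set x' | `|f (x, y) - f (x', y)| < eps / 2]) `*`
        [set y' | forall a, a \in F -> `|f (a, y) - f (a, y')| < dl]).
split.
  exists (V `&` [set x' | `|f (x, y) - f (x', y)| < eps / 2],
          [set y' | forall a, a \in F -> `|f (a, y) - f (a, y')| < dl]) => //=.
  split; last exact: nbhs_finite.
  apply: filterI; first exact: onbhs.
  exact: (cvgr_dist_lt _ _ (sepf.2 y x) _ e20).
move=> x' y' [[Vx' h1] h2] Uy'.
have Wy : Wk s n y by move=> i _; exact: Hs.
have Wy' : Wk s n y' by move=> i /= iln; exact: Uy'.
have := HF x' Vx' y y' Wy Wy' h2; rewrite /cc => h3.
rewrite (_ : f (x, y) - f (x', y') = (f (x, y) - f (x', y)) + (f (x', y) - f (x', y'))); last by rewrite addrA subrK.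
apply: (le_lt_trans (ler_normD _ _)).
by rewrite [eps](splitr eps) ltr_leD.
Qed.


Lemma open_gt_abs (g : X -> R) : continuous g -> open [set x | cc < `|g x|].
Proof.
move=> cg; rewrite openE => x /= hx.
have r0 : 0 < `|g x| - cc by rewrite subr_gt0.
rewrite /interior; apply: filterS (cvgr_dist_lt _ _ (cg x) _ r0) => t /= ht.
have := lerB_dist (g x) (g t); lra.
Qed.

Definition Ek (m : nat) (s : nat -> nat) : set X :=
  [set x | exists s', (forall i, (i <= m)%N -> s' i = s i) /\ forall n, ~ Aset n s' x].

Definition Pst m s (V : set X) := [/\ open V, V !=set0 &
  forall V', open V' -> V' !=set0 -> V' `<=` V -> ~ meag (Ek m s `&` V')].

Definition state := ((nat -> nat) * set X * (K * K))%type.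

Definition Good (st : state) m (Ua : set X) (F : seq X) (st' : state) : Prop :=
 [/\ forall i, (i <= m)%N -> st'.1.1 i = st.1.1 i, Pst m.+1 st'.1.1 st'.1.2,
   st'.1.2 `<=` Ua,
   [/\ Wk st'.1.1 m st'.2.1, Wk st'.1.1 m st'.2.2 &
   forall a, a \in F -> `|f (a, st'.2.1) - f (a, st'.2.2)| < dl] &
   forall x, st'.1.2 x -> cc < `|f (x, st'.2.1) - f (x, st'.2.2)|].

Definition upd (s : nat -> nat) (m j : nat) : nat -> nat :=
  fun i => if i == m.+1 then j else s i.

Lemma Ek_split m s : Ek m s `<=` \bigcup_j Ek m.+1 (upd s m j).
Proof.
move=> x [s' [hs nA]]; exists (s' m.+1) => //; exists s'; split => // i iln.
rewrite /upd; case: eqP => [->//|ne]; apply: hs.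
have : i != m.+1 by apply/eqP.
lia.
Qed.

Lemma exists_step (st : state) m (Ua : set X) (F : seq X) :
  Pst m st.1.1 st.1.2 -> open Ua -> Ua !=set0 -> Ua `<=` st.1.2 ->
  exists st', Good st m Ua F st'.
Proof.
case: st => [[s V] [y0 z0]] /= [oV nV HV] oUa nUa UaV.
have nm := HV Ua oUa nUa UaV.
have [j nmj] : exists j, ~ meag (Ek m.+1 (upd s m j) `&` Ua).
  apply: contrapT => h; apply: nm.
  apply: (@meagS _ _ (\bigcup_j (Ek m.+1 (upd s m j) `&` Ua))).
    by move=> x [/Ek_split [j _ Ex] Ux]; exists j.
  apply: meag_bigcup => j; apply: contrapT => nj; apply: h; by exists j.
have [W [oW nW WUa HW]] := loc oUa nmj.
have [x'' [[s'' [hs'' nA]] Wx'']] : exists x, (Ek m.+1 (upd s m j) `&` W) x.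
  apply: contrapT => h; apply: (HW W oW nW (@subset_refl _ _)).
  apply: (@meagS _ _ set0); last exact/nd_meag/nd0.
  move=> x Hx; apply: h; by exists x.
have [x' [Wx' [y [z [Wy Wz Fs big]]]]] : exists x', W x' /\ exists y z,
   [/\ Wk s'' m y, Wk s'' m z,
       (forall a, a \in F -> `|f (a, y) - f (a, z)| < dl) &
       cc < `|f (x', y) - f (x', z)|].
  apply: contrapT => h; apply: (nA m); exists W; split => //; exists F.
  move=> x1 Wx1 y z Wy Wz Fs; rewrite leNgt; apply/negP => big.
  by apply: h; exists x1; split => //; exists y, z; split.
pose s1 := upd s m j.
have agree : forall i, (i <= m)%N -> s'' i = s1 i.
  by move=> i iln; apply: hs''; lia.
have agree2 : forall i, (i <= m)%N -> s1 i = s i.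
  move=> i iln; rewrite /s1 /upd; case: eqP => // e; lia.
have cont : continuous (fun x => f (x, y) - f (x, z)).
  by move=> x; apply: cvgB; [exact: (sepf.2 y x)|exact: (sepf.2 z x)].
exists (s1, W `&` [set x | cc < `|f (x, y) - f (x, z)|], (y, z)); split => //=.
- split.
  + exact: (openI oW (open_gt_abs cont)).
  + by exists x'.
  + move=> V2 oV2 nV2 V2V; apply: HW => //; apply: subset_trans V2V _.
    by move=> ? [].
- by move=> x [Wx _]; exact: WUa.
- by split => //; rewrite -(Wk_ext agree).
- by move=> x [].
Qed.

Definition stepf (st : state) m (Ua : set X) (F : seq X) : state :=
  match pselect (exists st', Good st m Ua F st') with
  | left H => sval (cid H) | right _ => st end.

Lemma stepP st m Ua F : (exists st', Good st m Ua F st') ->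
  Good st m Ua F (stepf st m Ua F).
Proof. by rewrite /stepf; case: pselect => // H _; exact: (svalP (cid H)). Qed.

Fixpoint stt (init : state) (x0 : X) (h : seq (set X * X)) (m : nat) : state :=
  if m is m'.+1 then
    stepf (stt init x0 h m') m' (nth (setT, x0) h m').1 (map snd (take m'.+1 h))
  else init.

Fixpoint sttf (init : state) (Ua : nat -> set X) (a : nat -> X) (m : nat) : state :=
  if m is m'.+1 then
    stepf (sttf init Ua a m') m' (Ua m') (map a (iota 0 m'.+1))
  else init.

Definition strat init x0 : beta_strategy X := fun h => (stt init x0 h (size h)).1.2.

Lemma stt_hist init x0 Ua a n m : (m <= n)%N ->
  stt init x0 (history Ua a n) m = sttf init Ua a m.
Proof.
elim: m => [//|m IH] lt /=; rewrite IH; last lia.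
congr stepf.
- by rewrite /history (nth_map 0) ?size_iota // nth_iota.
- rewrite /history -map_take take_iota -map_comp.
  by have -> : minn m.+1 n = m.+1 by lia.
Qed.

Lemma strat_hist init x0 Ua a n :
  strat init x0 (history Ua a n) = (sttf init Ua a n).1.2.
Proof. by rewrite /strat /history size_map size_iota stt_hist. Qed.

Lemma inv init x0 Ua a n : Pst 0 init.1.1 init.1.2 ->
  (forall i, (i < n)%N -> alpha_legal (strat init x0) Ua a i) ->
  Pst n (sttf init Ua a n).1.1 (sttf init Ua a n).1.2 /\
  forall m, (m < n)%N ->
    Good (sttf init Ua a m) m (Ua m) (map a (iota 0 m.+1)) (sttf init Ua a m.+1).
Proof.
move=> P0; elim: n => [|n IH] leg; first by split.
have [Pn Gn] : Pst n (sttf init Ua a n).1.1 (sttf init Ua a n).1.2 /\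
  forall m, (m < n)%N ->
    Good (sttf init Ua a m) m (Ua m) (map a (iota 0 m.+1)) (sttf init Ua a m.+1).
  by apply: IH => i ilt; apply: leg; lia.
have [oU [nU sU]] := leg n (ltnSn n).
rewrite strat_hist in sU.
have G := stepP (exists_step (map a (iota 0 n.+1)) Pn oU nU sU).
split; first by case: G.
move=> m; rewrite ltnS leq_eqVlt => /orP[/eqP->|]; first exact: G.
exact: Gn.
Qed.


Lemma clus_near (h : nat -> {ptws X -> R}) (g : {ptws X -> R}) (p : X) (r : R) N :
  cluster (h @ \oo) g -> 0 < r ->
  exists n, (N <= n)%N /\ `|(g : X -> R) p - (h n : X -> R) p| < r.
Proof.
move=> cl r0.
have A : (h @ \oo) (h @` [set n | (N <= n)%N]).
  by exists N => // n Nn; exists n.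
have B : nbhs g [set psi : {ptws X -> R} | `|(g : X -> R) p - (psi : X -> R) p| < r].
  move: (@proj_continuous _ _ p g) => c.
  have Fg : Filter (nbhs g) by exact: nbhs_pfilter.
  by have := cvgr_dist_lt _ _ c _ r0; move=> /(_ Fg).
have [psi [[n Nn <-] Bn]] := cl _ _ A B.
by exists n.
Qed.

Lemma nbhs_R (v : R) (r : R) : 0 < r -> nbhs v [set w | `|v - w| < r].
Proof.
move=> r0; have c : (fun w : R => w) @ v --> v by exact: cvg_id.
by have := cvgr_dist_lt _ _ c _ r0; apply; exact: nbhs_filter.
Qed.



Variable Gamma : set {ptws X -> R}.
Hypothesis defav : sigma_beta_defavorable Gamma.
Hypothesis cpc : cpc_covers (phi_of f) Gamma U.

Lemma meag_Ebad (k0 : K) : meag Ebad.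
Proof.
apply: contrapT => nm.
have [j nmj] : exists j, ~ meag (Ek 0 (fun _ => j) `&` setT).
  apply: contrapT => h; apply: nm.
  apply: (@meagS _ _ (\bigcup_j (Ek 0 (fun _ => j) `&` setT))).
    move=> x [s nA]; exists (s 0%N) => //; split => //.
    by exists s; split => // i; rewrite leqn0 => /eqP ->.
  apply: meag_bigcup => j; apply: contrapT => nj; apply: h; by exists j.
have [W0 [oW0 [x0 W0x0] _ HW0]] := loc openT nmj.
pose init : state := ((fun _ => j), W0, (k0, k0)).
have P0 : Pst 0 init.1.1 init.1.2 by split => //; exists x0.
apply: defav; exists (strat init x0); split.
  move=> Ua a n leg; have [[oV nV _] Gn] := inv P0 leg.
  rewrite /beta_legal strat_hist; split => //; split => // m nm1.
  by subst n; case: (Gn m (ltnSn m)).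
move=> Ua a leg aw.
have Gall : forall m, Good (sttf init Ua a m) m (Ua m) (map a (iota 0 m.+1))
   (sttf init Ua a m.+1).
  by move=> m; apply: (inv (n := m.+1) P0 (fun i _ => leg i)).2.
pose ss m := (sttf init Ua a m).1.1.
have agr : forall m i, (i <= m)%N -> ss m i = ss i i.
  elim=> [|m IH] i; first by rewrite leqn0 => /eqP ->.
  rewrite leq_eqVlt => /orP[/eqP->//|]; rewrite ltnS => im.
  by have [G1 _ _ _ _] := Gall m; rewrite /ss G1 // -/(ss m) IH.
pose sinf i := ss i i.
pose ys n := (sttf init Ua a n.+1).2.1.
pose zs n := (sttf init Ua a n.+1).2.2.
have Wyz : forall n, Wk sinf n (ys n) /\ Wk sinf n (zs n).
  move=> n; have [_ _ _ [Wy Wz _] _] := Gall n.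
  have e : Wk sinf n = Wk (ss n.+1) n.
    by apply: Wk_ext => i iln; rewrite /sinf agr //; lia.
  by rewrite e.
have cs := @cpc sinf.
have [g [Gg clg]] := cs ys zs (fun n => (Wyz n).1) (fun n => (Wyz n).2).
have [t [Ut clt]] := aw g Gg.
pose h n := (fun x => phi_of f (ys n) x - phi_of f (zs n) x) : {ptws X -> R}.
have big : forall n, cc < `|(h n : X -> R) t|.
  move=> n; have [_ _ _ _ G6] := Gall n; apply: G6.
  have [_ [_ sU]] := leg n.+1; rewrite strat_hist in sU.
  exact: sU.
have small : forall j n, (j <= n)%N -> `|(h n : X -> R) (a j)| < dl.
  move=> j1 n jn; have [_ _ _ [_ _ G5] _] := Gall n; apply: G5.
  by apply: map_f; rewrite mem_iota; lia.
have dlcc : dl < cc by rewrite /dl /cc; have := eps0; lra.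
have gt : cc <= `|(g : X -> R) t|.
  rewrite leNgt; apply/negP => lt.
  have r0 : 0 < cc - `|(g : X -> R) t| by rewrite subr_gt0.
  have [n [_ hn]] := clus_near t 0 clg r0.
  have := big n; have := lerB_dist ((h n : X -> R) t) ((g : X -> R) t).
  rewrite distrC in hn; lra.
have ga : forall j1, `|(g : X -> R) (a j1)| <= dl.
  move=> j1; rewrite leNgt; apply/negP => lt.
  have r0 : 0 < `|(g : X -> R) (a j1)| - dl by rewrite subr_gt0.
  have [n [jn hn]] := clus_near (a j1) j1 clg r0.
  have := small j1 n jn; have := lerB_dist ((g : X -> R) (a j1)) ((h n : X -> R) (a j1)).
  lra.
have r0 : 0 < cc - dl by rewrite subr_gt0.
have [v [[n _ <-] vn]] := clt _ (nbhs_R ((g : X -> R) t) r0).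
have := ga n; have := lerB_dist ((g : X -> R) t) ((g : X -> R) (a n)).
move: vn gt => /=; lra.
Qed.

End Main.

Unset Implicit Arguments.
Theorem theorem3p1 (R : realType) (X K : topologicalType) (f : X * K -> R)
  (Gamma : set {ptws X -> R}) (U : nat -> nat -> set K) :
  sep_continuous f ->
  seq_of_countable_covers U ->
  sigma_beta_defavorable Gamma ->
  cpc_covers (phi_of f) Gamma U ->
  forall eps : R, 0 < eps ->
  exists Reps : set X, residual Reps /\
    forall x y, Reps x ->
      exists (k : nat) (s : nat -> nat),
        (forall i, (i <= k)%N -> U i (s i) y) /\
        exists O : set (X * K), nbhs (x, y) O /\
          forall x' y', O (x', y') -> (forall i, (i <= k)%N -> U i (s i) y') ->
            `|f (x, y) - f (x', y')| < eps.
Proof.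
move=> sepf cov defav cpc eps eps0.
have [[k0 _]|nK] := pselect (exists k : K, True); last first.
  exists setT; split.
    by exists (fun _ => set0); split => [n|x /= []]; [exact: nd0|].
  by move=> x y; case: nK; exists y.
exists (~` Ebad f U eps); split.
  have [N [ndN sub]] := meag_Ebad eps0 sepf defav cpc k0.
  by exists N; split => //; rewrite setCK.
by move=> x y nE; exact: good_side.
Qed.
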